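(* Let $\mu\in\mathcal{M}^+(\mathbb{R}^d)$ be compactly supported and let $V$ be a measure vector field satisfying (V1). Then for $N$ sufficiently large, $$\|\mu-\mathcal{A}_N^x(\mu)\|_{BL^*}\le\sqrt d\,\Delta_N^2\|\mu\|_{BL^*},\qquad \|V[\mu]-\mathcal{A}_N^v(V[\mu])\|_{BL^*}\le 2\sqrt d\,\Delta_N\|\mu\|_{BL^*}.$$
   Context: A measure vector field is a map $V:\mathcal{M}^+(\mathbb{R}^d)\to\mathcal{M}^+(\mathbb{R}^d\times\mathbb{R}^d)$ ($\mathcal{M}^+$: finite nonnegative Borel measures) with $\pi_1^{\#}V[\mu]=\mu$, $\pi_1(x,v)=x$; (V1): there is $C_S>0$ with $\sup_{(x,v)\in\operatorname{supp}V[\mu]}|v|\le C_S(1+\sup_{(x,v)\in\operatorname{supp}V[\mu]}|x|)$. $\|f\|_{BL}=\max(\sup|f|,\operatorname{Lip}(f))$, $\|\mu\|_{BL^*}=\sup\{\int\psi\,d\mu:\|\psi\|_{BL}\le1\}$ (on $\mathbb{R}^d$ or $\mathbb{R}^{2d}$). For $N\in\mathbb{N}$ let $\Delta_N=1/N$; let $x_1,\dots,x_I$ enumerate $(N^{-2}\mathbb{Z}^d)\cap[-N,N]^d$ and $v_1,\dots,v_J$ enumerate $(N^{-1}\mathbb{Z}^d)\cap[-N,N]^d$; set $Q_i=x_i+[0,\Delta_N^2)^d$, $Q'_j=v_j+[0,\Delta_N)^d$. Define $\mathcal{A}_N^x(\mu)=\sum_{i=1}^I\mu(Q_i)\delta_{x_i}$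 and, for $W\in\mathcal{M}^+(\mathbb{R}^d\times\mathbb{R}^d)$, $\mathcal{A}_N^v(W)=\sum_{i=1}^I\sum_{j=1}^J W(Q_i\times Q'_j)\delta_{(x_i,v_j)}$. *)

(* Defs.v *)
From HB Require Import structures.
From mathcomp Require Import all_boot all_order all_algebra.
From mathcomp Require Import all_classical all_reals all_analysis.
Set Implicit Arguments. Unset Strict Implicit. Unset Printing Implicit Defensive.
Import Order.TTheory GRing.Theory Num.Theory.
Import numFieldNormedType.Exports.
Local Open Scope classical_set_scope.
Local Open Scope ring_scope.

HB.instance Definition _ (T1 T2 : ptopologicalType) := Pointed.on (T1 * T2)%type.

Notation Rd R d := (g_sigma_algebraType (@open 'rV[R]_d)).
Notation Rd2 R d := (g_sigma_algebraType (@open ('rV[R]_d * 'rV[R]_d)%type)).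

Section defs.
Variable R : realType.

Definition enorm d (x : 'rV[R]_d) : R := Num.sqrt (\sum_(j < d) x 0 j ^+ 2).
Definition enorm2 d (p : 'rV[R]_d * 'rV[R]_d) : R :=
  Num.sqrt (\sum_(j < d) p.1 0 j ^+ 2 + \sum_(j < d) p.2 0 j ^+ 2).

Definition msupp (T : ptopologicalType)
  (mu : set (g_sigma_algebraType (@open T)) -> \bar R) : set T :=
  [set x : T | forall U : set T, open U -> U x -> (0 < mu U)%E].

(* ||f||_BL <= 1 w.r.t. the metric dist: sup|f| <= 1 and Lip(f) <= 1 *)
Definition BL1 (T : Type) (dist : T -> T -> R) (f : T -> R) : Prop :=
  (forall x, `|f x| <= 1) /\ (forall x y, `|f x - f y| <= dist x y).

Definition eucl_dist d (x y : 'rV[R]_d) : R := enorm (x - y).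
Definition eucl_dist2 d (p q : 'rV[R]_d * 'rV[R]_d) : R :=
  enorm2 (p.1 - q.1, p.2 - q.2).

Definition bl_norm (T : ptopologicalType) (dist : T -> T -> R)
  (mu : {measure set (g_sigma_algebraType (@open T)) -> \bar R}) : \bar R :=
  ereal_sup [set (\int[mu]_x (f x)%:E)%E | f in BL1 dist].

Definition bl_dist (T : ptopologicalType) (dist : T -> T -> R)
  (mu nu : {measure set (g_sigma_algebraType (@open T)) -> \bar R}) : \bar R :=
  ereal_sup [set (\int[mu]_x (f x)%:E - \int[nu]_x (f x)%:E)%E | f in BL1 dist].

(* finite weighted sum of Dirac masses  \sum_i w_i delta_{p_i}  *)
Definition dmeasure dd (G : measurableType dd) (I : finType) (p : I -> G)
  (w : I -> {nonneg R}) : {measure set G -> \bar R} :=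
  msum (fun k => nth (mzero : {measure set G -> \bar R})
    [seq (mscale (w i) (\d_(p i)) : {measure set G -> \bar R}) | i <- enum I] k)
    #|I|.

Definition nng_meas dd (G : measurableType dd) (mu : {measure set G -> \bar R})
  (A : set G) : {nonneg R} := NngNum (fine_ge0 (measure_ge0 mu A)).

Definition Delta (N : nat) : R := (N%:R)^-1.

(* Grid (N^-2 Z^d) cap [-N,N]^d, indexed by k : 'I_d -> [0, 2 N^3]:        *)
Definition gridX_idx (d N : nat) := {ffun 'I_d -> 'I_(2 * N ^ 3).+1}.
Definition gridX d N (k : gridX_idx d N) : 'rV[R]_d :=
  \row_j (((k j)%:R - (N ^ 3)%:R) / (N ^ 2)%:R).
(* Grid (N^-1 Z^d) cap [-N,N]^d, indexed by m : 'I_d -> [0, 2 N^2]:        *)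
Definition gridV_idx (d N : nat) := {ffun 'I_d -> 'I_(2 * N ^ 2).+1}.
Definition gridV d N (m : gridV_idx d N) : 'rV[R]_d :=
  \row_j (((m j)%:R - (N ^ 2)%:R) / N%:R).

Definition cubeQ d N (k : gridX_idx d N) : set 'rV[R]_d :=
  [set x | forall j, gridX k 0 j <= x 0 j < gridX k 0 j + Delta N ^+ 2].
Definition cubeQ' d N (m : gridV_idx d N) : set 'rV[R]_d :=
  [set v | forall j, gridV m 0 j <= v 0 j < gridV m 0 j + Delta N].

Definition AX d N (mu : {measure set (Rd R d) -> \bar R}) :
  {measure set (Rd R d) -> \bar R} :=
  @dmeasure _ (Rd R d) (gridX_idx d N) (fun k => gridX k)
    (fun k => nng_meas mu (cubeQ k)).

Definition AV d N (W : {measure set (Rd2 R d) -> \bar R}) :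
  {measure set (Rd2 R d) -> \bar R} :=
  @dmeasure _ (Rd2 R d) (gridX_idx d N * gridV_idx d N)%type
    (fun km => (gridX km.1, gridV km.2))
    (fun km => nng_meas W (cubeQ km.1 `*` cubeQ' km.2)).

Definition measure_vector_field d
  (V : {finite_measure set (Rd R d) -> \bar R} ->
       {finite_measure set (Rd2 R d) -> \bar R}) : Prop :=
  forall (mu : {finite_measure set (Rd R d) -> \bar R}) (A : set (Rd R d)),
    measurable A -> V mu (fst @^-1` A) = mu A.

Definition V1 d
  (V : {finite_measure set (Rd R d) -> \bar R} ->
       {finite_measure set (Rd2 R d) -> \bar R}) : Prop :=
  exists CS : R, 0 < CS /\
  forall mu : {finite_measure set (Rd R d) -> \bar R},
    (ereal_sup [set (enorm p.2)%:E | p in @msupp ('rV[R]_d * 'rV[R]_d)%type (V mu)]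
     <= CS%:E * (1 + ereal_sup [set (enorm p.1)%:E | p in @msupp ('rV[R]_d * 'rV[R]_d)%type (V mu)]))%E.

End defs.

(* Main.v *)
Require Import Defs.
From HB Require Import structures.
From mathcomp Require Import all_boot all_order all_algebra.
From mathcomp Require Import all_classical all_reals all_analysis.
From mathcomp Require Import measurable_realfun.
From mathcomp Require Import ring lra.
Import Order.TTheory GRing.Theory Num.Theory.
Import numFieldNormedType.Exports.
Local Open Scope classical_set_scope.
Local Open Scope ring_scope.

Section abstract.
Variable R : realType.
Variable T : ptopologicalType.
Local Open Scope ereal_scope.
Local Notation M := (g_sigma_algebraType (@open T)).

Lemma dmeasure_integral (I : finType) (p : I -> M) (w : I -> {nonneg R})
  (g : M -> \bar R) : measurable_fun setT g -> (forall x, 0 <= g x) ->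
  \int[dmeasure p w]_x g x = \sum_(i : I) ((w i)%:num)%:E * g (p i).
Proof.
move=> mg g0.
rewrite /dmeasure ge0_integral_measure_sum //.
set s := [seq _ | i <- enum I].
have -> : \sum_(k < #|I|) \int[nth (mzero : {measure set M -> \bar R}) s k]_x g x = \sum_(m <- s) \int[m]_x g x.
  by rewrite [RHS](big_nth (mzero : {measure set M -> \bar R})) size_map -cardE big_mkord.
rewrite big_map big_enum /=; apply: eq_bigr => i _.
by rewrite ge0_integral_mscale // integral_dirac // diracT mul1e.
Qed.


Lemma integrable_cst_fin (mm : {measure set M -> \bar R}) (k : R) :
  mm setT < +oo -> mm.-integrable setT (EFin \o cst k).
Proof.
move=> mfin; apply/integrableP; split.
  exact/measurable_EFinP/measurable_cst.
rewrite (eq_integral (cst `|k|%:E)); last by [].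
by rewrite (integral_cst mm (@measurableT _ M)) lte_mul_pinfty // lee_fin.
Qed.

Lemma intB1 (mm : {measure set M -> \bar R}) (f : M -> R) :
  mm setT < +oo -> measurable_fun setT f -> (forall x, `|f x| <= 1)%R ->
  \int[mm]_x (f x)%:E = \int[mm]_x (f x + 1)%:E - mm setT.
Proof.
move=> mfin mf f1.
have i1 := integrable_cst_fin mm 1%R mfin.
have i2 : mm.-integrable setT (EFin \o (fun x => f x + 1)%R).
  apply: (le_integrable _ _ _ (integrable_cst_fin mm 2%R mfin)) => //.
  - apply/measurable_EFinP; apply: measurable_funD => //; exact: measurable_cst.
  - move=> x _ /=; rewrite lee_fin.
    rewrite (ger0_norm (ler0n _ 2)); have := f1 x => h.
    apply: le_trans (ler_normD _ _) _; rewrite normr1; lra.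
transitivity (\int[mm]_x ((f x + 1)%:E - ((cst 1%R) x)%:E)).
  by apply: eq_integral => x _; rewrite /= -EFinB addrK.
rewrite integralB_EFin //; congr (_ - _).
by rewrite (eq_integral (cst 1%:E)) // (integral_cst mm (@measurableT _ M)) mul1e.
Qed.


Lemma ind_ge0 (T0 : Type) (B : set T0) (x : T0) : (0 <= \1_B x :> R)%R.
Proof. by rewrite indicE ler0n. Qed.

Lemma grid_approx (nu : {finite_measure set M -> \bar R}) (dist : T -> T -> R)
  (Hmeas : forall f, BL1 dist f -> measurable_fun setT (f : M -> R))
  (I : finType) (p : I -> M) (Q : I -> set M) (F : set M) (c : R) :
  (forall i, measurable (Q i)) -> measurable F -> nu F = 0 ->
  (forall i j x, Q i x -> Q j x -> i = j) ->
  (forall x, F x \/ exists i, Q i x) ->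
  (0 <= c)%R -> (forall i x, Q i x -> (dist x (p i) <= c)%R) ->
  bl_dist dist nu (dmeasure p (fun i => nng_meas nu (Q i)))
    <= (c * fine (nu setT))%R%:E.
Proof.
move=> mQ mF nuF disj cov c0 Hc.
set A := dmeasure _ _.
set a := fun i => fine (nu (Q i)).
set m := fine (nu setT).
have nuT : nu setT = m%:E by rewrite fineK // fin_num_measure.
have nuQ i : nu (Q i) = (a i)%R%:E by rewrite fineK // fin_num_measure.
have a0 i : (0 <= a i)%R by rewrite /a fine_ge0.
have nufin : nu setT < +oo by rewrite nuT ltry.
have Aset : A setT = (\sum_i a i)%R%:E.
  rewrite -[A setT]mul1e -(integral_cst A (@measurableT _ M)).
  rewrite dmeasure_integral //.
  by rewrite -sumEFin; apply: eq_bigr => i _; rewrite mule1.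
have Afin : A setT < +oo by rewrite Aset ltry.
apply: ge_ereal_sup => _ [f Hf <-].
have mf := Hmeas f Hf.
have [f1 fL] := Hf.
have G0 x : (0 <= f x + 1)%R by have := f1 x; rewrite ler_norml => /andP[? ?]; lra.
have mG : measurable_fun setT (fun x : M => (f x + 1)%R%:E).
  by apply/measurable_EFinP; apply: measurable_funD => //; exact: measurable_cst.
rewrite (intB1 nu f nufin mf f1) (intB1 A f Afin mf f1).
have IA : \int[A]_x (f x + 1)%R%:E = (\sum_i a i * (f (p i) + 1))%R%:E.
  rewrite dmeasure_integral //.
  by rewrite -sumEFin; apply: eq_bigr => i _; rewrite EFinM.
have tI (k : R) (E : set M) : (0 <= k)%R -> measurable E ->
    \int[nu]_x ((k * \1_E x)%R%:E) = k%:E * nu E.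
  move=> k0 mE; under eq_integral do rewrite EFinM.
  rewrite ge0_integralZl_EFin //.
  - by rewrite (integral_indic nu (@measurableT _ M) mE) setIT.
  - by apply/measurable_EFinP; exact: measurable_indic.
have Inu : \int[nu]_x (f x + 1)%R%:E <= (\sum_i (f (p i) + 1 + c) * a i)%R%:E.
  pose h x := (\sum_i (f (p i) + 1 + c) * \1_(Q i) x + 2 * \1_F x)%R.
  apply: (@le_trans _ _ (\int[nu]_x (h x)%R%:E)).
    apply: ge0_le_integral => //.
    - by move=> x _; rewrite lee_fin.
    - apply/measurable_EFinP; apply: measurable_funD.
        apply: measurable_sum => i; apply: measurable_funM.
          exact: measurable_cst.
        exact: measurable_indic.
      apply: measurable_funM; first exact: measurable_cst.
      exact: measurable_indic.
    - move=> x _; rewrite lee_fin /h.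
      have Fge : (0 <= 2 * \1_F x :> R)%R by rewrite mulr_ge0 // ind_ge0.
      have tge i : (0 <= (f (p i) + 1 + c) * \1_(Q i) x)%R.
        by rewrite mulr_ge0 ?ind_ge0 // addr_ge0.
      case: (cov x) => [Fx | [i Qi]].
        rewrite indicE mem_set // mulr1.
        have s0 : (0 <= \sum_i (f (p i) + 1 + c) * \1_(Q i) x)%R.
          by apply: sumr_ge0 => i _.
        by have := f1 x; rewrite ler_norml => /andP[? ?]; lra.
      rewrite (bigD1 i) //= indicE mem_set // mulr1.
      have s0 : (0 <= \sum_(j | j != i) (f (p j) + 1 + c) * \1_(Q j) x)%R.
        by apply: sumr_ge0 => j _.
      have := fL x (p i); rewrite ler_norml => /andP[_ h1].
      have := Hc i x Qi; lra.
  rewrite (eq_integral (fun x => (\sum_i ((f (p i) + 1 + c) * \1_(Q i) x)%R%:E)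
                              + (2 * \1_F x)%R%:E)); last first.
    by move=> x _; rewrite /h EFinD sumEFin.
  rewrite ge0_integralD //.
  - rewrite ge0_integral_sum //.
    + rewrite tI ?nuF ?mule0 ?adde0 //.
      rewrite -sumEFin le_eqVlt; apply/orP; left; apply/eqP.
      apply: eq_bigr => i _; rewrite tI // ?nuQ //; exact: addr_ge0.
    + move=> i; apply/measurable_EFinP; apply: measurable_funM.
        exact: measurable_cst.
      exact: measurable_indic.
    + by move=> i x _; rewrite lee_fin mulr_ge0 ?ind_ge0 // addr_ge0.
  - by move=> x _; apply: sume_ge0 => i _; rewrite lee_fin mulr_ge0 ?ind_ge0 // addr_ge0.
  - apply: emeasurable_sum => i; apply/measurable_EFinP; apply: measurable_funM.
      exact: measurable_cst.
    exact: measurable_indic.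
  - apply/measurable_EFinP; apply: measurable_funM; first exact: measurable_cst.
    exact: measurable_indic.
have Sa : (\sum_i a i <= m)%R.
  rewrite -lee_fin -nuT -sumEFin.
  have -> : \sum_i (a i)%R%:E = \int[nu]_x (\sum_i (\1_(Q i) x)%R%:E).
    rewrite ge0_integral_sum //.
    + by apply: eq_bigr => i _; rewrite (integral_indic nu (@measurableT _ M) (mQ i)) setIT; exact/esym/nuQ.
    + by move=> i; apply/measurable_EFinP; exact: measurable_indic.
  rewrite -[nu setT]mul1e -(integral_cst nu (@measurableT _ M)).
  apply: ge0_le_integral => //.
  - by move=> x _; apply: sume_ge0 => i _; rewrite lee_fin ind_ge0.
  - apply: emeasurable_sum => i; apply/measurable_EFinP; exact: measurable_indic.
  - move=> x _; rewrite sumEFin /= lee_fin.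
    case: (pselect (exists i, Q i x)) => [[i Qi] | nQ].
      rewrite (bigD1 i) //= indicE mem_set // big1 ?addr0 // => j ji.
      rewrite indicE memNset // => Qj; move/eqP: ji; apply; exact: disj Qj Qi.
    rewrite big1 // => j _; rewrite indicE memNset // => Qj; by apply: nQ; exists j.
have J0 : 0 <= \int[nu]_x (f x + 1)%R%:E by apply: integral_ge0 => x _; rewrite lee_fin.
have Jfin : \int[nu]_x (f x + 1)%R%:E = (fine (\int[nu]_x (f x + 1)%R%:E))%:E.
  by rewrite fineK // ge0_fin_numE //; apply: le_lt_trans Inu _; exact: ltry.
have nuT2 : (nu : {measure set M -> \bar R}) setT = m%:E := nuT.
move: Inu; rewrite Jfin nuT2 Aset IA -!EFinB !lee_fin.
have -> : (\sum_i (f (p i) + 1 + c) * a i = \sum_i a i * (f (p i) + 1) + c * \sum_i a i)%R.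
  rewrite mulr_sumr -big_split; apply: eq_bigr => i _ /=; ring.
have := ler_wpM2l c0 Sa; lra.
Qed.

End abstract.

Section top2.
Variable R : realType.
Variable T : ptopologicalType.
Local Open Scope ereal_scope.
Local Notation M := (g_sigma_algebraType (@open T)).

Lemma open_meas (A : set T) : open A -> measurable (A : set M).
Proof. by move=> oA; apply: sub_sigma_algebra. Qed.

Lemma closed_meas (A : set T) : closed A -> measurable (A : set M).
Proof.
move=> cA; rewrite -[A]setCK; apply: measurableC; apply: open_meas.
exact: closed_openC.
Qed.

Lemma compact_negl (nu : {measure set M -> \bar R}) (C : set T) :
  compact C -> (forall x, C x -> ~ msupp nu x) -> nu.-negligible (C : set M).
Proof.
move=> cC Cns; rewrite compact_cover in cC.
pose D := [set U : set T | open U /\ nu U = 0].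
have cov : C `<=` cover D id.
  move=> x Cx; apply: contrapT => H; apply: (Cns x Cx) => U oU Ux.
  apply: contrapT => nlt; apply: H; exists U => //; split => //.
  by apply/eqP; rewrite eq_le measure_ge0 andbT leNgt; apply/negP.
have [D' sD' Ccov] := cC (set T) D id (fun U DU => DU.1) cov.
apply: (@negligibleS _ _ _ nu (\big[setU/set0]_(U <- finmap.enum_fset D') U : set M) C).
  move=> x /Ccov [U /= UD' Ux].
  rewrite -bigcup_fset; by exists U.
rewrite big_seq; elim/big_ind: _.
- exact: negligible_set0.
- by move=> ? ?; apply: negligibleU.
- move=> U /sD' /set_mem [oU nuU]. have := @negligibleP _ _ _ nu U (open_meas U oU). move=> [_ ]; apply. exact: nuU.
Qed.


Lemma closed_null (nu : {measure set M -> \bar R}) (F : set T) (K : nat -> set T) :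
  closed F -> (forall n, compact (K n)) -> (forall x, exists n, K n x) ->
  (forall x, F x -> ~ msupp nu x) -> nu (F : set M) = 0.
Proof.
move=> cF cK Kcov Fns.
have : nu.-negligible (F : set M).
  apply: (@negligibleS _ _ _ nu (\bigcup_n (K n `&` F) : set M) F).
    by move=> x Fx; have [n Kn] := Kcov x; exists n.
  apply: negligible_bigcup => n; apply: compact_negl.
    exact: compact_closedI.
  by move=> x [_ Fx]; exact: Fns.
by move/(@negligibleP _ _ _ nu _ (closed_meas F cF)).
Qed.

Lemma cont_meas (f : T -> R) : continuous f -> measurable_fun setT (f : M -> R).
Proof.
move=> cf; apply: (measurability _ (RGenOpens.measurableE R)).
move=> _ [_ [a [b ->]] <-]; rewrite setTI; apply: open_meas.
by move/continuousP : cf; apply; exact: interval_open.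
Qed.


Lemma box_meas n (phi : 'I_n -> T -> R) (a b : 'I_n -> R) :
  (forall j, continuous (phi j)) ->
  measurable ([set x | forall j, (a j <= phi j x < b j)%R] : set M).
Proof.
move=> cphi.
have -> : [set x | forall j, (a j <= phi j x < b j)%R] =
    \bigcap_(j in [set: 'I_n]) ((phi j @^-1` [set y | a j <= y]%R) `&`
                                 (phi j @^-1` [set y | y < b j]%R)).
  apply/seteqP; split => x /=.
    by move=> H j _; have /andP[h1 h2] := H j; split.
  by move=> H j; have [h1 h2] := H j I; apply/andP; split.
apply: fin_bigcap_measurable => // j _; apply: measurableI.
  apply: closed_meas; apply: preimage_closed; last exact: closed_ge.
  by move=> x _; exact: cphi.
apply: open_meas; move/continuousP : (cphi j); apply; exact: open_lt.
Qed.

End top2.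

Section eucl.
Variable R : realType.
Variable d : nat.

Lemma sqrt_le (s t : R) : 0 <= t -> s <= t ^+ 2 -> Num.sqrt s <= t.
Proof.
move=> t0 st; rewrite -[t]ger0_norm // -sqrtr_sqr ler_sqrt //; exact: sqr_ge0.
Qed.

Lemma coord_le_norm (v : 'rV[R]_d) j : `|v 0 j| <= `|v|.
Proof.
have /mapP[k _ ->] : `|v 0 j| \in [seq `|v x.1 x.2| | x : 'I_1 * 'I_d].
  by apply/mapP; exists (0, j) => //=; rewrite mem_enum.
by rewrite [leRHS]/Num.Def.normr /= mx_normrE; apply/bigmax_geP; right => /=; exists k.
Qed.

Lemma norm_le_coord (v : 'rV[R]_d) B : 0 <= B -> (forall j, `|v 0 j| <= B) -> `|v| <= B.
Proof.
move=> B0 H; rewrite [leLHS]/Num.Def.normr /= mx_normrE; apply/bigmax_leP; split => // -[i j] _ /=.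
by rewrite (ord1 i); exact: H.
Qed.

Lemma sumsq_le (v : 'rV[R]_d) : \sum_(j < d) v 0 j ^+ 2 <= d%:R * `|v| ^+ 2.
Proof.
have -> : (d%:R : R) = \sum_(j < d) 1 by rewrite sumr_const card_ord.
rewrite mulr_suml.
apply: ler_sum => j _; rewrite mul1r.
have := coord_le_norm v j; rewrite ler_norml => /andP[h1 h2]; nra.
Qed.

Lemma coord_le_enorm (v : 'rV[R]_d) j : `|v 0 j| <= enorm v.
Proof.
rewrite /enorm -sqrtr_sqr ler_sqrt; last by apply: sumr_ge0 => i _; exact: sqr_ge0.
rewrite (bigD1 j) //= lerDl; apply: sumr_ge0 => i _; exact: sqr_ge0.
Qed.

Lemma norm_le_enorm (v : 'rV[R]_d) : `|v| <= enorm v.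
Proof. by apply: norm_le_coord; [exact: sqrtr_ge0 | exact: coord_le_enorm]. Qed.

Lemma enorm_le (v : 'rV[R]_d) : enorm v <= Num.sqrt d%:R * `|v|.
Proof.
apply: sqrt_le; first by rewrite mulr_ge0 ?sqrtr_ge0.
by rewrite exprMn sqr_sqrtr ?ler0n //; exact: sumsq_le.
Qed.


Lemma lip_cont (f : 'rV[R]_d -> R) :
  (forall x y, `|f x - f y| <= eucl_dist x y) -> continuous f.
Proof.
move=> fL x; apply/(@cvgrPdist_lt _ _ _ (nbhs x) _) => e e0.
set s := Num.sqrt (d%:R : R).
have s0 : 0 <= s by exact: sqrtr_ge0.
have e1 : 0 < e / (s + 1) by rewrite divr_gt0 // ltr_wpDl.
have hx := @cvgr_dist_lt _ _ _ (nbhs x) _ id x (@cvg_id _ (nbhs x)) _ e1.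
near=> y.
have hy : `|x - y| < e / (s + 1) by near: y; exact: hx.
apply: (le_lt_trans (fL x y)); rewrite /eucl_dist.
apply: (le_lt_trans (enorm_le _)); rewrite -/s.
move: hy; rewrite ltr_pdivlMr ?ltr_wpDl // => hy.
have := normr_ge0 (x - y); nra.
Unshelve. all: by end_near.
Qed.

Lemma fst_cont : continuous (@fst 'rV[R]_d 'rV[R]_d).
Proof. by move=> p; exact: cvg_fst. Qed.
Lemma snd_cont : continuous (@snd 'rV[R]_d 'rV[R]_d).
Proof. by move=> p; exact: cvg_snd. Qed.

Lemma enorm2_le (p : 'rV[R]_d * 'rV[R]_d) :
  enorm2 p <= Num.sqrt d%:R * (`|p.1| + `|p.2|).
Proof.
apply: sqrt_le; first by rewrite mulr_ge0 ?sqrtr_ge0 ?addr_ge0.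
rewrite exprMn sqr_sqrtr ?ler0n //.
have h1 := sumsq_le p.1; have h2 := sumsq_le p.2.
have a0 := normr_ge0 p.1; have b0 := normr_ge0 p.2.
have dd : (0 <= d%:R * (`|p.1| * `|p.2|) :> R) by rewrite mulr_ge0 ?mulr_ge0.
nra.
Qed.

Lemma lip_cont2 (f : 'rV[R]_d * 'rV[R]_d -> R) :
  (forall p q, `|f p - f q| <= eucl_dist2 p q) -> continuous f.
Proof.
move=> fL p; apply/(@cvgrPdist_lt _ _ _ (nbhs p) _) => e e0.
set s := Num.sqrt (d%:R : R).
have s0 : 0 <= s by exact: sqrtr_ge0.
have e1 : 0 < e / (2 * s + 1) by rewrite divr_gt0 // ltr_wpDl // mulr_ge0.
have h1 := @cvgr_dist_lt _ _ _ (nbhs p) _ fst p.1 (fst_cont p) _ e1.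
have h2 := @cvgr_dist_lt _ _ _ (nbhs p) _ snd p.2 (snd_cont p) _ e1.
near=> q.
have hq1 : `|p.1 - q.1| < e / (2 * s + 1) by near: q; exact: h1.
have hq2 : `|p.2 - q.2| < e / (2 * s + 1) by near: q; exact: h2.
apply: (le_lt_trans (fL p q)); rewrite /eucl_dist2.
apply: (le_lt_trans (enorm2_le _)); rewrite -/s /=.
move: hq1 hq2; rewrite !ltr_pdivlMr ?ltr_wpDl ?mulr_ge0 // => hq1 hq2.
have := normr_ge0 (p.1 - q.1); have := normr_ge0 (p.2 - q.2); nra.
Unshelve. all: by end_near.
Qed.


Lemma grid_floor (N s L : nat) (y : R) : (0 < s)%N -> L = (N * s)%N ->
  `|y| < N%:R -> exists k : 'I_(2 * L).+1,
  (k%:R - L%:R) / s%:R <= y < (k%:R - L%:R) / s%:R + s%:R^-1.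
Proof.
move=> s0 -> hy.
have sR : 0 < s%:R :> R by rewrite ltr0n.
move: hy; rewrite ltr_norml => /andP[hyl hyr].
set t := (y + N%:R) * s%:R.
have t0 : 0 <= t by rewrite /t mulr_ge0 ?(ltW sR) //; lra.
have /andP[k1 k2] := truncn_itv t0.
have kl : (Num.trunc t < (2 * (N * s)).+1)%N.
  rewrite ltnS -(ler_nat R); apply: le_trans k1 _.
  rewrite /t !natrM; nra.
exists (Ordinal kl) => /=.
rewrite -[X in _ < _ + X]mul1r -mulrDl ler_pdivrMr // ltr_pdivlMr //.
move: k1 k2; rewrite /t -natr1 !natrM; set K := (Num.trunc _)%:R => k1 k2.
apply/andP; split; nra.
Qed.

Lemma grid_uniq (s L k k' : nat) (y : R) : (0 < s)%N ->
  (k%:R - L%:R) / s%:R <= y < (k%:R - L%:R) / s%:R + s%:R^-1 ->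
  (k'%:R - L%:R) / s%:R <= y < (k'%:R - L%:R) / s%:R + s%:R^-1 -> k = k'.
Proof.
move=> s0; have sR : 0 < s%:R :> R by rewrite ltr0n.
move=> /andP[h1 h2] /andP[h3 h4].
rewrite -[X in _ < _ + X]mul1r -mulrDl ltr_pdivlMr // in h2.
rewrite -[X in _ < _ + X]mul1r -mulrDl ltr_pdivlMr // in h4.
rewrite ler_pdivrMr // in h1; rewrite ler_pdivrMr // in h3.
have a : k%:R < k'%:R + 1 :> R by lra.
have b : k'%:R < k%:R + 1 :> R by lra.
move: a b; rewrite !natr1 !ltr_nat !ltnS => a b.
by apply/eqP; rewrite eqn_leq a b.
Qed.

Lemma cell_sum (v : 'rV[R]_d) (e : R) : (forall j, 0 <= v 0 j <= e) ->
  \sum_(j < d) v 0 j ^+ 2 <= d%:R * e ^+ 2.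
Proof.
move=> H.
have -> : (d%:R : R) = \sum_(j < d) 1 by rewrite sumr_const card_ord.
rewrite mulr_suml; apply: ler_sum => j _; rewrite mul1r.
have /andP[h1 h2] := H j; nra.
Qed.


Lemma DeltaX2 N : Delta R N ^+ 2 = ((N ^ 2)%:R)^-1.
Proof. by rewrite /Delta exprVn natrX. Qed.

Lemma Delta01 N : (0 < N)%N -> 0 <= Delta R N <= 1.
Proof.
move=> N0; rewrite /Delta invr_ge0 ler0n /= invf_le1 ?ltr0n //.
by rewrite (ler_nat R 1).
Qed.

Lemma cover_X N (x : 'rV[R]_d) : (0 < N)%N -> `|x| < N%:R ->
  exists k : gridX_idx d N, cubeQ k x.
Proof.
move=> N0 hx.
have H j : exists kj : 'I_(2 * N ^ 3).+1,
    ((kj%:R - (N ^ 3)%:R) / (N ^ 2)%:R <= x 0 j <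
     (kj%:R - (N ^ 3)%:R) / (N ^ 2)%:R + ((N ^ 2)%:R)^-1).
  apply: grid_floor; first by rewrite expn_gt0 N0.
    by rewrite expnS.
  exact: le_lt_trans (coord_le_norm _ _) hx.
exists [ffun j => xchoose (H j)]; rewrite /cubeQ /= => j.
by rewrite /gridX mxE ffunE DeltaX2; exact: (xchooseP (H j)).
Qed.

Lemma disj_X N (k k' : gridX_idx d N) (x : 'rV[R]_d) : (0 < N)%N ->
  cubeQ k x -> cubeQ k' x -> k = k'.
Proof.
move=> N0 h h'; apply/ffunP => j; apply/val_inj.
apply: (@grid_uniq (N ^ 2) (N ^ 3) _ _ (x 0 j)); first by rewrite expn_gt0 N0.
  by have := h j; rewrite /gridX mxE DeltaX2.
by have := h' j; rewrite /gridX mxE DeltaX2.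
Qed.

Lemma diam_X N (k : gridX_idx d N) (x : 'rV[R]_d) : cubeQ k x ->
  eucl_dist x (gridX R k) <= Num.sqrt d%:R * Delta R N ^+ 2.
Proof.
move=> h; rewrite /eucl_dist /enorm; apply: sqrt_le.
  by rewrite mulr_ge0 ?sqrtr_ge0 ?sqr_ge0.
rewrite exprMn sqr_sqrtr ?ler0n //; apply: cell_sum => j.
have := h j; rewrite !mxE => /andP[h1 h2]; apply/andP; split; lra.
Qed.

Lemma cover_V N (v : 'rV[R]_d) : (0 < N)%N -> `|v| < N%:R ->
  exists m : gridV_idx d N, cubeQ' m v.
Proof.
move=> N0 hv.
have H j : exists mj : 'I_(2 * N ^ 2).+1,
    ((mj%:R - (N ^ 2)%:R) / N%:R <= v 0 j <
     (mj%:R - (N ^ 2)%:R) / N%:R + (N%:R)^-1).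
  apply: (@grid_floor N N (N ^ 2)); [exact: N0 | by rewrite mulnn |].
  exact: le_lt_trans (coord_le_norm _ _) hv.
exists [ffun j => xchoose (H j)]; rewrite /cubeQ' /= => j.
by rewrite /gridV mxE ffunE /Delta; exact: (xchooseP (H j)).
Qed.

Lemma disj_V N (m m' : gridV_idx d N) (v : 'rV[R]_d) : (0 < N)%N ->
  cubeQ' m v -> cubeQ' m' v -> m = m'.
Proof.
move=> N0 h h'; apply/ffunP => j; apply/val_inj.
apply: (@grid_uniq N (N ^ 2) _ _ (v 0 j)) => //.
  by have := h j; rewrite /gridV mxE /Delta.
by have := h' j; rewrite /gridV mxE /Delta.
Qed.

Lemma diam_V N (k : gridX_idx d N) (m : gridV_idx d N) (p : 'rV[R]_d * 'rV[R]_d) : (0 < N)%N ->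
  cubeQ k p.1 -> cubeQ' m p.2 ->
  eucl_dist2 p (gridX R k, gridV R m) <= 2 * Num.sqrt d%:R * Delta R N.
Proof.
move=> N0 h1 h2; rewrite /eucl_dist2 /enorm2 /=; apply: sqrt_le.
  by rewrite !mulr_ge0 ?sqrtr_ge0 //; case/andP: (Delta01 N N0).
have /andP[D0 D1] := Delta01 N N0.
have S1 : \sum_(j < d) (p.1 - gridX R k) 0 j ^+ 2 <= d%:R * (Delta R N ^+ 2) ^+ 2.
  apply: cell_sum => j.
  have := h1 j; rewrite !mxE => /andP[a1 a2]; apply/andP; split; lra.
have S2 : \sum_(j < d) (p.2 - gridV R m) 0 j ^+ 2 <= d%:R * Delta R N ^+ 2.
  apply: cell_sum => j.
  have := h2 j; rewrite !mxE => /andP[a1 a2]; apply/andP; split; lra.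
rewrite !exprMn sqr_sqrtr ?ler0n //.
have dd : (0 <= d%:R :> R) by [].
set D := Delta R N in S1 S2 D0 D1 *.
have : (D ^+ 2) ^+ 2 <= D ^+ 2 by rewrite expr2 ler_piMr // ?sqr_ge0 // expr_le1.
move=> h; have := ler_wpM2l dd h; nra.
Qed.

End eucl.

Section mainlemmas.
Variable R : realType.
Variable d : nat.

Lemma mass_le_bl (T : ptopologicalType) (dist : T -> T -> R)
  (mu : {measure set (g_sigma_algebraType (@open T)) -> \bar R}) :
  (forall x y, 0 <= dist x y) -> (mu setT <= bl_norm dist mu)%E.
Proof.
move=> d0; apply: ereal_sup_ubound; exists (fun _ => 1).
  by split => [x | x y]; rewrite ?normr1 ?subrr ?normr0.
rewrite (eq_integral (cst 1%:E)) //.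
by rewrite (integral_cst mu (@measurableT _ (g_sigma_algebraType (@open T)))) mul1e.
Qed.

Lemma supp_fst
  (V : {finite_measure set (Rd R d) -> \bar R} ->
       {finite_measure set (Rd2 R d) -> \bar R})
  (mu : {finite_measure set (Rd R d) -> \bar R}) p :
  measure_vector_field V ->
  msupp (V mu) p -> msupp mu p.1.
Proof.
move=> mvf Hp U oU Up1.
have := Hp (fst @^-1` U); rewrite mvf; last exact: open_meas.
apply => //; move/continuousP : (@fst_cont R d); apply; exact: oU.
Qed.

End mainlemmas.

Theorem proposition4p1 (R : realType) (d : nat)
  (mu : {finite_measure set (Rd R d) -> \bar R})
  (V : {finite_measure set (Rd R d) -> \bar R} ->
       {finite_measure set (Rd2 R d) -> \bar R}) :
  compact (msupp mu : set 'rV[R]_d) ->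
  measure_vector_field V -> V1 V ->
  exists N0 : nat, forall N : nat, (N0 <= N)%N ->
    (bl_dist (@eucl_dist R d) mu (AX N mu)
       <= (Num.sqrt (d%:R) * Delta R N ^+ 2)%:E * bl_norm (@eucl_dist R d) mu)%E /\
    (bl_dist (@eucl_dist2 R d) (V mu) (AV N (V mu))
       <= (2 * Num.sqrt (d%:R) * Delta R N)%:E * bl_norm (@eucl_dist R d) mu)%E.
Proof.
move=> cK mvf [CS [CS0 HV1]].
have [r Hr] : exists r : R, forall x, msupp mu x -> `|x| <= r.
  have [M [Mr HM]] := compact_bounded cK.
  exists (`|M| + 1) => x Ax; apply: (HM (`|M| + 1)) => //.
  by apply: le_lt_trans (real_ler_norm Mr) _; rewrite ltrDl.
set s := Num.sqrt (d%:R : R).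
have s0 : 0 <= s by exact: sqrtr_ge0.
have r0 : 0 <= `|r| by [].
have Hr' x : msupp mu x -> `|x| <= `|r|.
  by move=> /Hr h; apply: le_trans h (ler_norm _).
set Rv := CS * (1 + s * `|r|).
have HRv p : msupp (V mu) p -> `|p.2| <= Rv.
  move=> Hp.
  have h1 q : msupp (V mu) q -> enorm q.1 <= s * `|r|.
    move=> /(@supp_fst R d V mu q mvf) /Hr' hq; apply: le_trans (@enorm_le R d q.1) _.
    exact: ler_wpM2l.
  have s1 : (ereal_sup [set (enorm q.1)%:E | q in msupp (V mu)] <= (s * `|r|)%:E)%E.
    by apply: ge_ereal_sup => _ [q Hq <-]; rewrite lee_fin; exact: h1.
  have : ((enorm p.2)%:E <= Rv%:E)%E.
    have hp : [set (enorm q.2)%:E | q in msupp (V mu)] (enorm p.2)%:E by exists p.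
    apply: le_trans (ereal_sup_ubound hp) _.
    apply: le_trans (HV1 mu) _.
    rewrite /Rv EFinM EFinD; apply: lee_wpmul2l; first by rewrite lee_fin ltW.
    by apply: leeD.
  rewrite lee_fin => h; exact: le_trans (@norm_le_enorm R d p.2) h.
set Bx := `|r| + 1.
set Bv := Rv + 1.
have Bx0 : 0 < Bx by rewrite /Bx ltr_wpDl.
have Rv0 : 0 <= Rv by apply: mulr_ge0; [exact: ltW | apply: addr_ge0 => //; exact: mulr_ge0].
have Bv0 : 0 < Bv by rewrite /Bv ltr_wpDl.
exists (Num.trunc (Bx + Bv)).+1 => N HN.
have N0 : (0 < N)%N by apply: leq_trans HN.
have NB : Bx + Bv < N%:R.
  by apply: lt_le_trans (truncnS_gt _) _; rewrite ler_nat.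
have BxN : Bx < N%:R by lra.
have BvN : Bv < N%:R by lra.
have /andP[D0 D1] := Delta01 R N N0.
split.
-
  pose F := [set x : 'rV[R]_d | Bx <= `|x|].
  have Hm f : BL1 (@eucl_dist R d) f -> measurable_fun setT (f : Rd R d -> R).
    by move=> Hf; apply: cont_meas; apply: lip_cont; case: Hf.
  have mQ k : measurable (@cubeQ R d N k : set (Rd R d)).
    apply: (@box_meas R 'rV[R]_d d (fun j (x : 'rV[R]_d) => x 0 j) (fun j => gridX R k 0 j) (fun j => gridX R k 0 j + Delta R N ^+ 2)).
    move=> j; exact: coord_continuous.
  have cF : closed F.
    apply: (@preimage_closed _ _ (@Num.Def.normr _ 'rV[R]_d) [set y | Bx <= y]).
      by move=> x _; exact: norm_continuous.
    exact: closed_ge.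
  have nuF : mu (F : set (Rd R d)) = 0%E.
    apply: (@closed_null R 'rV[R]_d mu F (fun n => [set x : 'rV[R]_d | `|x| <= n%:R])) => //.
    - move=> n; apply: bounded_closed_compact.
        exists n%:R; split; first exact: num_real.
        by move=> M nM x /= xn; apply: (le_trans xn); exact: ltW.
      apply: (@preimage_closed _ _ (@Num.Def.normr _ 'rV[R]_d) [set y | y <= n%:R]).
        by move=> x _; exact: norm_continuous.
      exact: closed_le.
    - move=> x; exists (Num.trunc `|x|).+1 => /=; exact: ltW (truncnS_gt _).
    - move=> x Fx /Hr' h; move: Fx; rewrite /F /Bx /=; lra.
  have cov x : F x \/ exists k, @cubeQ R d N k x.
    have [h|h] := leP Bx `|x|; first by left.
    right; apply: cover_X => //; lra.
  have c0 : 0 <= s * Delta R N ^+ 2 by rewrite mulr_ge0 // sqr_ge0.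
  have Hc k x : @cubeQ R d N k x -> eucl_dist x (gridX R k) <= s * Delta R N ^+ 2.
    exact: diam_X.
  have G := @grid_approx R 'rV[R]_d mu (@eucl_dist R d) Hm (gridX_idx d N)
    (fun k => gridX R k) (@cubeQ R d N) F (s * Delta R N ^+ 2) mQ
    (@closed_meas _ F cF) nuF (fun k k' x => @disj_X R d N k k' x N0) cov c0 Hc.
  apply: le_trans G _.
  rewrite EFinM; apply: lee_wpmul2l; first by rewrite lee_fin mulr_ge0 // sqr_ge0.
  rewrite fineK ?fin_num_measure //; apply: mass_le_bl => x y.
  exact: sqrtr_ge0.
-
  pose F := [set p : 'rV[R]_d * 'rV[R]_d | Bx <= `|p.1| \/ Bv <= `|p.2|].
  have Hm f : BL1 (@eucl_dist2 R d) f -> measurable_fun setT (f : Rd2 R d -> R).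
    by move=> Hf; apply: cont_meas; apply: lip_cont2; case: Hf.
  have mQ (km : gridX_idx d N * gridV_idx d N) :
      measurable ((@cubeQ R d N km.1 `*` @cubeQ' R d N km.2) : set (Rd2 R d)).
    change (measurable (([set p : 'rV[R]_d * 'rV[R]_d | @cubeQ R d N km.1 p.1] `&`
                         [set p : 'rV[R]_d * 'rV[R]_d | @cubeQ' R d N km.2 p.2]) : set (Rd2 R d))).
    apply: measurableI.
      apply: (@box_meas R ('rV[R]_d * 'rV[R]_d)%type d
        (fun j (p : 'rV[R]_d * 'rV[R]_d) => p.1 0 j) (fun j => gridX R km.1 0 j)
        (fun j => gridX R km.1 0 j + Delta R N ^+ 2)).
      move=> j p; apply: (@continuous_comp _ _ _ fst (fun M : 'rV[R]_d => M 0 j)); first exact: fst_cont.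
      exact: coord_continuous.
    apply: (@box_meas R ('rV[R]_d * 'rV[R]_d)%type d
      (fun j (p : 'rV[R]_d * 'rV[R]_d) => p.2 0 j) (fun j => gridV R km.2 0 j)
      (fun j => gridV R km.2 0 j + Delta R N)).
    move=> j p; apply: (@continuous_comp _ _ _ snd (fun M : 'rV[R]_d => M 0 j)); first exact: snd_cont.
    exact: coord_continuous.
  have cN (B : R) : closed [set x : 'rV[R]_d | B <= `|x|].
    apply: (@preimage_closed _ _ (@Num.Def.normr _ 'rV[R]_d) [set y | B <= y]).
      by move=> x _; exact: norm_continuous.
    exact: closed_ge.
  have cF : closed F.
    change (closed ((fst @^-1` [set x : 'rV[R]_d | Bx <= `|x|]) `|`
                    (snd @^-1` [set x : 'rV[R]_d | Bv <= `|x|]))).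
    apply: closedU; apply: preimage_closed => //.
      by move=> p _; exact: fst_cont.
    by move=> p _; exact: snd_cont.
  have cK1 (n : nat) : compact [set x : 'rV[R]_d | `|x| <= n%:R].
    apply: bounded_closed_compact.
      exists n%:R; split; first exact: num_real.
      by move=> M nM x /= xn; apply: (le_trans xn); exact: ltW.
    apply: (@preimage_closed _ _ (@Num.Def.normr _ 'rV[R]_d) [set y | y <= n%:R]).
      by move=> x _; exact: norm_continuous.
    exact: closed_le.
  have nuF : V mu (F : set (Rd2 R d)) = 0%E.
    apply: (@closed_null R ('rV[R]_d * 'rV[R]_d)%type (V mu) F
      (fun n => [set x : 'rV[R]_d | `|x| <= n%:R] `*` [set x : 'rV[R]_d | `|x| <= n%:R])) => //.
    - by move=> n; apply: compact_setX.
    - move=> p; exists (Num.trunc (`|p.1| + `|p.2|)).+1; split => /=.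
        apply: ltW; apply: le_lt_trans (truncnS_gt _); rewrite lerDl //.
      apply: ltW; apply: le_lt_trans (truncnS_gt _); rewrite lerDr //.
    - move=> p Fp Hp.
      have h1 := Hr' _ (@supp_fst R d V mu p mvf Hp).
      have h2 := HRv p Hp.
      by move: Fp; rewrite /F /Bx /Bv /=; lra.
  have cov p : F p \/ exists km, (@cubeQ R d N km.1 `*` @cubeQ' R d N km.2) p.
    have [h1|h1] := leP Bx `|p.1|; first by left; left.
    have [h2|h2] := leP Bv `|p.2|; first by left; right.
    right; have [k hk] := @cover_X R d N p.1 N0 ltac:(lra).
    have [m hm] := @cover_V R d N p.2 N0 ltac:(lra).
    by exists (k, m).
  have disj km km' p : (@cubeQ R d N km.1 `*` @cubeQ' R d N km.2) p ->
      (@cubeQ R d N km'.1 `*` @cubeQ' R d N km'.2) p -> km = km'.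
    case: km => k m; case: km' => k' m' [/= h1 h2] [/= h1' h2'].
    by rewrite (@disj_X R d N k k' p.1 N0 h1 h1') (@disj_V R d N m m' p.2 N0 h2 h2').
  have c0 : 0 <= 2 * s * Delta R N by rewrite !mulr_ge0.
  have Hc (km : gridX_idx d N * gridV_idx d N) p :
      (@cubeQ R d N km.1 `*` @cubeQ' R d N km.2) p ->
      eucl_dist2 p (gridX R km.1, gridV R km.2) <= 2 * s * Delta R N.
    by move=> [h1 h2]; exact: diam_V.
  have G := @grid_approx R ('rV[R]_d * 'rV[R]_d)%type (V mu) (@eucl_dist2 R d) Hm
    (gridX_idx d N * gridV_idx d N)%type
    (fun km => (gridX R km.1, gridV R km.2))
    (fun km => @cubeQ R d N km.1 `*` @cubeQ' R d N km.2) F (2 * s * Delta R N) mQ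
    (@closed_meas _ F cF) nuF disj cov c0 Hc.
  apply: le_trans G _.
  have VT : V mu setT = mu setT.
    by have := mvf mu setT measurableT; rewrite preimage_setT.
  rewrite EFinM; apply: lee_wpmul2l; first by rewrite lee_fin.
  rewrite fineK ?fin_num_measure // VT; apply: mass_le_bl => x y.
  exact: sqrtr_ge0.
Qed.
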